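(* Let $k\ge 2$, $\tau=1000k$, $\rho=1-\frac{1}{10\tau}$, let $g:\{0,1\}^n\to\{0,1\}$ be a $k$-term DNF and $y\in\{0,1\}^n$. Then for any set $S\subseteq[n]$ consisting entirely of indices that are morally irrelevant for $g$, \[\left|T_\rho g(y)-T_\rho g(y^{\oplus S})\right|\le\frac{1}{k^{50}},\] where $y^{\oplus S}$ is obtained from $y$ by flipping the bits with indices in $S$.
   Context: A term is short if it has at most $\tau$ literals, medium if it has between $\tau+1$ and $1000\tau\log k$ literals, and long if it has more than $1000\tau\log k$ literals. An index $i\in[n]$ is morally irrelevant for $g$ if no short or medium term of $g$ contains $x_i$ or $\overline{x_i}$. For $x\in\{0,1\}^n$, $\mathbf{y}\sim N_\rho(x)$ means each bit independently has $\mathbf{y}_i=x_i$ with probability $\rho$ and $1-x_i$ with probability $1-\rho$; $T_\rho g(x)=\mathbb{E}_{\mathbf{y}\sim N_\rho(x)}[g(\mathbf{y})]$. *)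

(* Defs.v *)
From HB Require Import structures.
From mathcomp Require Import all_boot all_order all_algebra.
From mathcomp Require Import reals exp.
Set Implicit Arguments. Unset Strict Implicit. Unset Printing Implicit Defensive.
Import Order.TTheory GRing.Theory Num.Theory.
Local Open Scope ring_scope.

(* A literal on [n] variables: (i, b) stands for x_i when b = true and
   for the negation of x_i when b = false. *)
Definition literal (n : nat) := ('I_n * bool)%type.
Definition term (n : nat) := {set literal n}.
Definition dnf (n : nat) := seq (term n).

Definition point (n : nat) := {ffun 'I_n -> bool}.

Definition eval_term n (t : term n) (x : point n) : bool :=
  [forall l in t, x l.1 == l.2].
Definition eval_dnf n (f : dnf n) (x : point n) : bool :=
  has (fun t => eval_term t x) f.

Definition is_k_term_dnf n (k : nat) (f : dnf n) : Prop := (size f <= k)%N.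

Definition log2 {R : realType} (x : R) : R := ln x / ln 2.

Definition short_or_medium {R : realType} n (tau : R) (k : nat) (t : term n) : bool :=
  (#|t|%:R <= 1000 * tau * log2 (k%:R : R)).

Definition morally_irrelevant {R : realType} n (tau : R) (k : nat)
    (f : dnf n) (i : 'I_n) : Prop :=
  forall t, t \in f -> short_or_medium tau k t -> forall b, (i, b) \notin t.

Definition noise_prob {R : realType} n (rho : R) (y z : point n) : R :=
  \prod_(i < n) (if z i == y i then rho else 1 - rho).
Definition T_rho {R : realType} n (rho : R) (g : point n -> bool) (y : point n) : R :=
  \sum_(z : point n) noise_prob rho y z * (g z)%:R.

Definition flip n (S : {set 'I_n}) (y : point n) : point n :=
  [ffun i => if i \in S then ~~ y i else y i].

(* Main.v *)
Require Import Defs.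
From HB Require Import structures.
From mathcomp Require Import all_boot all_order all_algebra.
From mathcomp Require Import reals exp.
From mathcomp Require Import sequences ring lra.
Import Order.TTheory GRing.Theory Num.Theory.
Local Open Scope ring_scope.

Lemma flipK n (S : {set 'I_n}) : involutive (flip S).
Proof. by move=> z; apply/ffunP=> i; rewrite !ffunE; case: (i \in S) => //; rewrite negbK. Qed.

Lemma noise_flip (R : realType) n (r : R) (S : {set 'I_n}) y z :
  noise_prob r (flip S y) (flip S z) = noise_prob r y z.
Proof.
apply: eq_bigr => i _; rewrite !ffunE; case: (i \in S) => //.
by case: (z i); case: (y i).
Qed.

Lemma sum_flip (R : realType) n (r : R) (S : {set 'I_n}) y (F : point n -> R) :
  \sum_z noise_prob r (flip S y) z * F z = \sum_z noise_prob r y z * F (flip S z).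
Proof.
rewrite (reindex_inj (can_inj (@flipK n S))) /=.
by apply: eq_bigr => z _; rewrite noise_flip.
Qed.

Lemma eval_term_prod n (t : term n) (z : point n) (R : realType) :
  ((eval_term t z)%:R : R) =
  \prod_i ([forall l in t, (l.1 == i) ==> (z i == l.2)])%:R.
Proof.
case E: (eval_term t z).
  rewrite big1 // => i _.
  suff -> : [forall l in t, (l.1 == i) ==> (z i == l.2)] by [].
  apply/forall_inP => l lt; apply/implyP => /eqP <-.
  by move/forall_inP: E => /(_ l lt).
move/negbT: E => /forall_inP /= E.
have [l lt /negP zl] : exists2 l, l \in t & ~~ (z l.1 == l.2).
  apply/exists_inP; rewrite -negb_forall_in; apply/negP => H; apply: E => l lt.
  by move/forall_inP: H => /(_ l lt).
rewrite (bigD1 l.1) //= .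
suff -> : [forall l0 in t, (l0.1 == l.1) ==> (z l.1 == l0.2)] = false by rewrite mul0r.
apply/negbTE/forall_inP => /(_ l lt); rewrite eqxx /= => zl'; exact: zl zl'.
Qed.
Lemma prob_term (R : realType) n (r : R) (t : term n) (y : point n) :
  1 - r <= r -> r <= 1 ->
  \sum_z noise_prob r y z * (eval_term t z)%:R <= r ^+ #|[set l.1 | l in t]|.
Proof.
move=> r1 r2.
have r0 : 0 <= r by apply: le_trans r1; rewrite subr_ge0.
have r10 : 0 <= 1 - r by rewrite subr_ge0.
pose c i b := [forall l in t, (l.1 == i) ==> (b == l.2)].
pose F i b := (if b == y i then r else 1 - r) * (c i b)%:R.
have -> : \sum_z noise_prob r y z * (eval_term t z)%:R = \sum_(z : point n) \prod_i F i (z i).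
  apply: eq_bigr => z _; rewrite eval_term_prod /noise_prob -big_split /=.
  by apply: eq_bigr => i _; rewrite /F /c eq_sym.
rewrite -(bigA_distr_bigA F) /=.
have F0 : forall i b, 0 <= F i b.
  by move=> i b; rewrite /F; apply: mulr_ge0 => //; case: ifP.
have Fle : forall i b, F i b <= (if b == y i then r else 1 - r).
  move=> i b; rewrite /F; rewrite -[X in _ <= X]mulr1; apply: ler_wpM2l.
    by case: ifP.
  by case: (c i b).
have S1 : forall i, 0 <= \sum_b F i b <= 1.
  move=> i; rewrite big_bool /= addr_ge0 //=.
  apply: le_trans (lerD (Fle i true) (Fle i false)) _.
  case: (y i) => /=; [by rewrite addrC subrK | by rewrite subrK].
rewrite (bigID (fun i => i \in [set l.1 | l in t])) /= -[X in _ <= X]mulr1 -prodr_const.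
apply: ler_pM.
- by apply: prodr_ge0 => i _; case/andP: (S1 i).
- by apply: prodr_ge0 => i _; case/andP: (S1 i).
- apply: ler_prod => i /imsetP [l lt ->]; case/andP: (S1 l.1) => -> _ /=.
  rewrite big_bool /=.
  have cE : forall b, c l.1 b -> b = l.2.
    by move=> b /forall_inP /(_ l lt); rewrite eqxx /= => /eqP.
  case: l lt cE => j b lt cE /=.
  case: b lt cE => lt cE.
    have -> : F j false = 0 by rewrite /F (_ : c j false = false) ?mulr0 //; apply/negP => /cE.
    rewrite addr0; apply: le_trans (Fle j true) _; by case: ifP.
  have -> : F j true = 0 by rewrite /F (_ : c j true = false) ?mulr0 //; apply/negP => /cE.
  rewrite add0r; apply: le_trans (Fle j false) _; by case: ifP.
- exact: prodr_ile1.
Qed.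
Lemma card_term n (t : term n) : (#|t| <= 2 * #|[set l.1 | l in t]|)%N.
Proof.
have sub : t \subset setX [set l.1 | l in t] [set: bool].
  apply/subsetP => -[i b] lt; rewrite inE /= in_setT andbT.
  by apply/imsetP; exists (i, b).
by apply: leq_trans (subset_leq_card sub) _; rewrite cardsX cardsT card_bool mulnC.
Qed.

Lemma ln2_le (R : realType) : ln (2 : R) <= 25 / 26.
Proof.
have h : (2 : R) <= expR (25 / 26).
  have -> : (25 / 26 : R) = 2%:R * (25 / 52) by field.
  rewrite expRM_natl.
  have := expR_ge1Dx (25 / 52 : R); set a := expR _ => ha.
  rewrite expr2; nra.
rewrite -[X in _ <= X](expRK (R:=R)) ler_ln //; rewrite posrE ?expR_gt0 //.
Qed.

Lemma rho_pow (R : realType) (k m : nat) :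
  (2 <= k)%N ->
  1000 * (1000 * k%:R : R) * log2 (k%:R : R) < 2 * m%:R ->
  (1 - (10 * (1000 * k%:R))^-1) ^+ m <= ((k%:R : R) ^+ 52)^-1.
Proof.
move=> k2 hyp.
have K2 : (2 : R) <= k%:R by rewrite (ler_nat R 2 k).
set K : R := k%:R in K2 hyp *.
have K0 : 0 < K by lra.
set x := (10 * (1000 * K))^-1.
have x0 : 0 < x by rewrite /x invr_gt0; lra.
have x1 : x <= 1.
  rewrite /x invf_le1; lra.
have rle : 1 - x <= expR (- x) by have := expR_ge1Dx (- x); rewrite addrC.
apply: le_trans (_ : expR (- x) ^+ m <= _).
  by apply: lerXn2r; rewrite ?nnegrE; lra.
rewrite -expRM_natl.
have -> : (K ^+ 52)^-1 = expR (- (52%:R * ln K)).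
  by rewrite expRN expRM_natl lnK // posrE.
rewrite ler_expR mulrN lerN2.
have l2 := ln2_le R.
have l20 : 0 < ln (2 : R) by apply: ln_gt0; lra.
have L0 : 0 <= ln K by apply: ln_ge0; lra.
move: hyp; rewrite /log2; set q := ln K / ln 2 => hyp.
have qE : ln K = q * ln 2 by rewrite /q mulfVK // gt_eqF.
have q0 : 0 <= q by rewrite /q divr_ge0 // ltW.
rewrite qE /x.
rewrite mulrC -ler_pdivlMr; last lra.
rewrite !ler_pdivlMr //; last lra.
have h1 : q * ln 2 * K <= q * (25 / 26) * K.
  by apply: ler_wpM2r; [lra | apply: ler_wpM2l].
nra.
Qed.

Lemma le_sum_mem (R : realType) (T : eqType) (s : seq T) (F : T -> R) x :
  x \in s -> (forall y, 0 <= F y) -> F x <= \sum_(y <- s) F y.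
Proof.
move=> xs F0; elim: s xs => // a s IH; rewrite inE big_cons => /orP [/eqP -> | xs].
  by rewrite lerDl sumr_ge0.
by apply: le_trans (IH xs) _; rewrite lerDr.
Qed.

Lemma pointwise (R : realType) n (tau : R) (k : nat) (f : dnf n) (S : {set 'I_n}) z :
  (forall i, i \in S -> morally_irrelevant tau k f i) ->
  `| ((eval_dnf f z)%:R : R) - (eval_dnf f (flip S z))%:R | <=
  \sum_(t <- [seq t <- f | ~~ short_or_medium tau k t])
     ((eval_term t z)%:R + (eval_term t (flip S z))%:R).
Proof.
move=> hS.
set L := [seq t <- f | _].
have F0 : forall t, 0 <= ((eval_term t z)%:R + (eval_term t (flip S z))%:R : R).
  by move=> t; rewrite addr_ge0.
case H: (has (fun t => eval_term t z || eval_term t (flip S z)) L).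
  case/hasP: H => t tL ht.
  apply: (le_trans _ (@le_sum_mem _ _ _ _ _ tL F0)).
  apply: (@le_trans _ _ 1).
    by case: (eval_dnf f z); case: (eval_dnf f (flip S z)); rewrite /= ?subrr ?normr0 ?subr0 ?sub0r ?normrN ?normr1.
  by case/orP: ht => ->; rewrite ?lerDl ?lerDr.
move/negbT/hasPn: H => H.
suff -> : eval_dnf f (flip S z) = eval_dnf f z by rewrite subrr normr0 sumr_ge0.
apply: eq_in_has => t tf /=.
case sm: (short_or_medium tau k t).
  apply: eq_forallb_in => l lt; rewrite ffunE; case: ifP => // lS.
  exfalso; have := hS _ lS t tf sm l.2; rewrite -surjective_pairing lt //.
have tL : t \in L by rewrite mem_filter sm tf.
by have := H t tL; case: (eval_term t z); case: (eval_term t (flip S z)).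
Qed.

Theorem claim6p7 (R : realType) (k n : nat) (f : dnf n) (y : point n)
    (S : {set 'I_n}) :
  let tau : R := 1000 * k%:R in
  let rho : R := 1 - (10 * tau)^-1 in
  (2 <= k)%N ->
  is_k_term_dnf k f ->
  (forall i, i \in S -> morally_irrelevant tau k f i) ->
  `| T_rho rho (eval_dnf f) y - T_rho rho (eval_dnf f) (flip S y) |
    <= (k%:R ^+ 50)^-1.
Proof.
move=> tau rho k2 hk hS.
have K2 : (2 : R) <= k%:R by rewrite (ler_nat R 2 k).
have r1 : 1 - rho <= rho /\ rho <= 1.
  have x0 : 0 < (10 * tau)^-1 by rewrite invr_gt0 /tau; lra.
  have x1 : (10 * tau)^-1 <= 1 / 2.
    rewrite -[X in _ <= X]invf_div divr1 lef_pV2 ?posrE /tau; lra.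
  rewrite /rho; split; lra.
case: r1 => r1 r2.
set L := [seq t <- f | ~~ short_or_medium tau k t].
set c : R := (k%:R ^+ 52)^-1.
have Pt : forall t, t \in L -> forall y', \sum_z noise_prob rho y' z * (eval_term t z)%:R <= c.
  move=> t; rewrite mem_filter => /andP [nsm _] y'.
  apply: le_trans (@prob_term _ _ _ t y' r1 r2) _.
  apply: (@rho_pow R k) => //.
  apply: lt_le_trans (_ : #|t|%:R <= _).
    by move: nsm; rewrite /short_or_medium -ltNge.
  by rewrite -natrM ler_nat card_term.
rewrite /T_rho (@sum_flip R n rho S y (fun z => (eval_dnf f z)%:R)) -sumrB.
apply: le_trans (ler_norm_sum _ _ _) _.
apply: le_trans (_ : \sum_z noise_prob rho y z *
    \sum_(t <- L) ((eval_term t z)%:R + (eval_term t (flip S z))%:R) <= _).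
  apply: ler_sum => z _; rewrite -mulrBr normrM.
  have P0 : 0 <= noise_prob rho y z.
    by apply: prodr_ge0 => i _; case: ifP => _; lra.
  rewrite ger0_norm //; apply: ler_wpM2l => //; exact: pointwise.
under eq_bigr => z _ do rewrite mulr_sumr.
rewrite exchange_big /=.
apply: le_trans (_ : \sum_(t <- L) (c + c) <= _).
  rewrite big_seq_cond [X in _ <= X]big_seq_cond; apply: ler_sum => t /andP [tL _].
  rewrite -/(noise_prob rho y _) .
  under eq_bigr => z _ do rewrite mulrDr.
  rewrite big_split /=; apply: lerD; first exact: Pt.
  rewrite -(@sum_flip R n rho S y (fun z => (eval_term t z)%:R)); exact: Pt.
rewrite big_const_seq count_predT iter_addr_0.
have sL : (size L <= k)%N by rewrite size_filter; apply: leq_trans (count_size _ _) hk.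
apply: le_trans (_ : (c + c) *+ k <= _).
  rewrite -[(c + c) *+ size L]mulr_natr -[(c + c) *+ k]mulr_natr.
  apply: ler_wpM2l; last by rewrite ler_nat.
  by rewrite addr_ge0 // /c invr_ge0 exprn_ge0.
rewrite -[(c + c) *+ k]mulr_natr /c.
have K0 : (k%:R : R) != 0 by apply/eqP; lra.
have -> : ((k%:R : R) ^+ 52)^-1 = (k%:R ^+ 50)^-1 * (k%:R ^-1 * k%:R ^-1).
  by rewrite -invfM -expr2 -invfM -exprD.
set a := (k%:R ^+ 50)^-1.
have a0 : 0 <= a by rewrite /a invr_ge0 exprn_ge0 //; lra.
have -> : (a * (k%:R^-1 * k%:R^-1) + a * (k%:R^-1 * k%:R^-1)) * k%:R = a * (2 * k%:R^-1).
  by field.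
rewrite -[X in _ <= X]mulr1; apply: ler_wpM2l => //.
have : (k%:R : R)^-1 <= 2^-1 by rewrite lef_pV2 ?posrE; lra.
lra.
Qed.
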